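(* For every integer $n\ge 0$, $$\ell_n=(-1)^{n-1}\int_1^{+\infty}\frac{\{x\}}{x^2}L_n(\log x)\,\mathrm{d}x .$$
   Context: $\{x\}=x-\lfloor x\rfloor$ is the fractional part. $L_n(u)=\sum_{k=0}^n\binom{n}{k}\frac{(-1)^k}{k!}u^k$ are the Laguerre polynomials. The Stieltjes constants are $\gamma_n=\lim_{N\to\infty}\left(\sum_{k=1}^N\frac{\log^n k}{k}-\frac{\log^{n+1}N}{n+1}\right)$. The coefficients $\ell_n$ are defined by $\ell_0=\gamma_0-1$ and $\ell_n=\sum_{k=1}^n\binom{n-1}{k-1}\frac{(-1)^{n-k}}{k!}\gamma_k$ for $n\ge1$. *)

(* Defs.v *)
From Stdlib Require Import Reals.
From Coquelicot Require Import Coquelicot.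
Open Scope R_scope.

(* {x} = x - floor x ; Stdlib's frac_part x = x - IZR (Int_part x), Int_part = floor *)
Definition frac (x : R) : R := frac_part x.

Definition laguerre (n : nat) (u : R) : R :=
  sum_f_R0 (fun k => Binomial.C n k * (-1) ^ k / INR (Factorial.fact k) * u ^ k) n.

Definition stieltjes_seq (n : nat) (N : nat) : R :=
  sum_f_R0 (fun j => (ln (INR (j + 1))) ^ n / INR (j + 1)) (N - 1)
  - (ln (INR N)) ^ (n + 1) / INR (n + 1).

Definition stieltjes (n : nat) : R := real (Lim_seq (stieltjes_seq n)).

Definition ell (n : nat) : R :=
  match n with
  | O => stieltjes 0 - 1
  | S m => sum_f_R0 (fun j => Binomial.C m j * (-1) ^ (n - (j + 1))
                               / INR (Factorial.fact (j + 1)) * stieltjes (j + 1)) m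
  end.

(* Main.v *)
Require Import Defs.
From Stdlib Require Import Reals Lra Lia Classical.
From Coquelicot Require Import Coquelicot.
Open Scope R_scope.

Lemma frac_int (k : nat) x : INR k < x < INR k + 1 -> frac x = x - INR k.
Proof.
  intros [H1 H2]. unfold frac, frac_part.
  assert (Int_part x = Z.of_nat k) as E.
  { unfold Int_part. rewrite <- (up_tech x (Z.of_nat k)). lia.
    rewrite <- INR_IZR_INZ; lra.
    rewrite plus_IZR, <- INR_IZR_INZ; simpl; lra. }
  rewrite E, <- INR_IZR_INZ; ring.
Qed.

Lemma frac_bnd x : 0 <= frac x < 1.
Proof. unfold frac. destruct (base_fp x). lra. Qed.

Lemma exRInt_frac (h : R -> R) : (forall x, 1 <= x -> continuous h x) ->
  forall b, 1 <= b -> ex_RInt (fun x => frac x * h x) 1 b.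
Proof.
  intros Hc.
  assert (Hk : forall k:nat, (1 <= k)%nat -> ex_RInt (fun x => frac x * h x) (INR k) (INR k + 1)).
  { intros k Hk. apply le_INR in Hk. simpl in Hk.
    apply ex_RInt_ext with (fun x => (x - INR k) * h x).
    - intros x Hx. rewrite Rmin_left in Hx by lra. rewrite Rmax_right in Hx by lra.
      rewrite (frac_int k x) by lra. reflexivity.
    - apply (@ex_RInt_continuous R_CompleteNormedModule). intros z Hz. rewrite Rmin_left in Hz by lra. rewrite Rmax_right in Hz by lra.
      apply (continuous_mult (fun x => x - INR k) h).
      apply (continuous_minus (fun x => x) (fun _ => INR k)). apply continuous_id. apply continuous_const.
      apply Hc. lra. }
  assert (Hn : forall n:nat, forall b, 1 <= b <= INR (S n) -> ex_RInt (fun x => frac x * h x) 1 b).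
  { induction n; intros b Hb.
    - simpl in Hb. replace b with 1 by lra. apply ex_RInt_point.
    - destruct (Rle_dec b (INR (S n))). apply IHn; lra.
      pose proof (pos_INR n). rewrite (S_INR (S n)) in Hb.
      apply ex_RInt_Chasles with (INR (S n)). apply IHn. rewrite S_INR; lra.
      apply (@ex_RInt_Chasles_1 R_CompleteNormedModule) with (INR (S n) + 1). lra.
      apply Hk. lia. }
  intros b Hb. destruct (INR_archimed 1 b) as [n Hn']. lra. apply Hn with n. split; auto. rewrite S_INR. lra.
Qed.

Definition limI (f : R -> R) (L : R) : Prop :=
  (forall b, 1 <= b -> ex_RInt f 1 b) /\
  (forall eps, 0 < eps -> exists M, 1 <= M /\ forall b, M <= b -> Rabs (RInt f 1 b - L) < eps).

Lemma limI_ext f g L : (forall x, 1 <= x -> f x = g x) -> limI f L -> limI g L.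
Proof.
  intros He [H1 H2]. split.
  - intros b Hb. apply ex_RInt_ext with f; [|auto]. intros x Hx. rewrite Rmin_left in Hx by lra. apply He; lra.
  - intros eps He'. destruct (H2 eps He') as [M [HM1 HM]]. exists M; split; auto. intros b Hb.
    replace (RInt g 1 b) with (RInt f 1 b). apply HM; auto.
    apply (@RInt_ext R_CompleteNormedModule). intros x Hx. rewrite Rmin_left in Hx by lra. apply He; lra.
Qed.

Lemma Rabs_lt_iff a b : Rabs a < b <-> - b < a < b.
Proof. unfold Rabs; destruct Rcase_abs; split; intros; lra. Qed.

Lemma limI_plus f g Lf Lg : limI f Lf -> limI g Lg -> limI (fun x => f x + g x) (Lf + Lg).
Proof.
  intros [F1 F2] [G1 G2]. split.
  - intros b Hb. apply (ex_RInt_plus f g); auto.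
  - intros eps He. destruct (F2 (eps/2)) as [M1 [HM1 HM1']]. lra.
    destruct (G2 (eps/2)) as [M2 [HM2 HM2']]. lra.
    exists (Rmax M1 M2). split. eapply Rle_trans; [apply HM1|apply Rmax_l].
    intros b Hb. assert (M1 <= b) by (eapply Rle_trans; [apply Rmax_l|apply Hb]).
    assert (M2 <= b) by (eapply Rle_trans; [apply Rmax_r|apply Hb]).
    replace (RInt (fun x => f x + g x) 1 b) with (RInt f 1 b + RInt g 1 b).
    specialize (HM1' b H). specialize (HM2' b H0).
    apply Rabs_lt_iff in HM1'. apply Rabs_lt_iff in HM2'. apply Rabs_lt_iff. lra.
    symmetry. apply (@RInt_plus R_CompleteNormedModule f g); [apply F1|apply G1]; lra.
Qed.

Lemma limI_scal c f L : limI f L -> limI (fun x => c * f x) (c * L).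
Proof.
  intros [F1 F2]. split.
  - intros b Hb. apply (ex_RInt_scal f); auto.
  - intros eps He. pose proof (Rabs_pos c).
    destruct (F2 (eps/(Rabs c + 1))) as [M [HM1 HM]]. apply Rdiv_lt_0_compat; lra.
    exists M. split; auto. intros b Hb.
    replace (RInt (fun x => c * f x) 1 b) with (c * RInt f 1 b).
    replace (c * RInt f 1 b - c * L) with (c * (RInt f 1 b - L)) by ring.
    rewrite Rabs_mult. specialize (HM b Hb).
    apply Rle_lt_trans with (Rabs c * (eps / (Rabs c + 1))).
    apply Rmult_le_compat_l; lra.
    apply Rmult_lt_reg_r with (Rabs c + 1). lra.
    replace (Rabs c * (eps / (Rabs c + 1)) * (Rabs c + 1)) with (Rabs c * eps) by (field; lra). nra.
    symmetry. apply (@RInt_scal R_CompleteNormedModule f). apply F1. lra.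
Qed.

Lemma limI_sum (F : nat -> R -> R) (Ls : nat -> R) n :
  (forall k, (k <= n)%nat -> limI (F k) (Ls k)) ->
  limI (fun x => sum_f_R0 (fun k => F k x) n) (sum_f_R0 Ls n).
Proof.
  induction n; intros H.
  - simpl. apply H. lia.
  - simpl. apply (limI_plus (fun x => sum_f_R0 (fun k => F k x) n) (F (S n))).
    apply IHn. intros; apply H; lia. apply H; lia.
Qed.

Lemma limI_mono g K : (forall b, 1 <= b -> ex_RInt g 1 b) -> (forall x, 1 <= x -> 0 <= g x) ->
  (forall b, 1 <= b -> RInt g 1 b <= K) -> { L | limI g L }.
Proof.
  intros Hex Hpos HK.
  set (E := fun y => exists b, 1 <= b /\ y = RInt g 1 b).
  destruct (completeness E) as [L [HL1 HL2]].
  - exists K. intros y [b [Hb ->]]. auto.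
  - exists (RInt g 1 1). exists 1. split; [lra|auto].
  - exists L. split; auto. intros eps Heps.
    assert (exists b, 1 <= b /\ L - eps < RInt g 1 b) as [b0 [Hb0 Hb0']].
    { destruct (classic (exists b, 1 <= b /\ L - eps < RInt g 1 b)) as [H|H]; auto.
      exfalso. assert (L <= L - eps); [|lra]. apply HL2. intros y [b [Hb ->]].
      apply Rnot_lt_le. intros Hc. apply H. exists b; auto. }
    exists b0. split; auto. intros b Hb.
    assert (ex_RInt g b0 b) by (apply (@ex_RInt_Chasles_2 R_CompleteNormedModule) with 1; [lra|apply Hex; lra]).
    assert (RInt g 1 b0 + RInt g b0 b = RInt g 1 b) by (apply (@RInt_Chasles R_CompleteNormedModule g); auto).
    assert (0 <= RInt g b0 b) by (apply RInt_ge_0; auto; intros; apply Hpos; lra).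
    assert (RInt g 1 b <= L) by (apply HL1; exists b; split; auto; lra).
    apply Rabs_lt_iff. lra.
Qed.

Lemma limI_gen f L : limI f L -> is_RInt_gen f (at_point 1) (Rbar_locally p_infty) L.
Proof.
  intros [Hex Hlim] P [eps HP].
  destruct (Hlim eps (cond_pos eps)) as [M [HM1 HM]].
  apply Filter_prod with (fun a => a = 1) (fun b => M < b).
  - reflexivity.
  - exists M. auto.
  - intros a b -> Hb. simpl. exists (RInt f 1 b). split. apply (@RInt_correct R_CompleteNormedModule), Hex; lra.
    apply HP. apply HM. lra.
Qed.

Lemma lim_real (u : nat -> R) f L c : limI f L -> (forall N, (1 <= N)%nat -> u N = c - RInt f 1 (INR N)) ->
  real (Lim_seq u) = c - L.
Proof.
  intros [Hex Hlim] Hu.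
  rewrite (is_lim_seq_unique u (c - L)). reflexivity.
  apply is_lim_seq_spec. intros eps. destruct (Hlim eps (cond_pos eps)) as [M [HM1 HM]].
  destruct (INR_archimed 1 M) as [N HN]; [lra|].
  exists N. intros n Hn. destruct N. simpl in HN; lra.
  rewrite Hu by lia.
  replace (c - RInt f 1 (INR n) - (c - L)) with (-(RInt f 1 (INR n) - L)) by ring. rewrite Rabs_Ropp.
  apply HM. apply le_INR in Hn. lra.
Qed.

Definition h (i : nat) (x : R) : R := ln x ^ i / x ^ 2.
Definition g (i : nat) (x : R) : R := frac x * h i x.

Fixpoint J (i : nat) (x : R) : R :=
  match i with O => - / x | S i' => - (ln x ^ (S i') / x) + INR (S i') * J i' x end.

Lemma J_deriv i x : 0 < x -> is_derive (J i) x (h i x).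
Proof.
  intros Hx. unfold h. induction i.
  - simpl. auto_derive. lra. field. lra.
  - assert (H1 : is_derive (fun y => - (ln y ^ S i / y)) x
       (-( INR (S i) * ln x ^ i / x / x - ln x ^ S i / x^2))).
    { auto_derive. lra. change (match i with 0%nat => 1 | S _ => INR i + 1 end) with (INR (S i)). replace (ln x ^ S i) with (ln x * ln x ^ i) by reflexivity.
      field. lra. }
    pose proof (is_derive_scal (J i) x (INR (S i)) _ IHi) as H2.
    pose proof (is_derive_plus _ _ x _ _ H1 H2) as H3.
    apply (is_derive_ext _ (J (S i))) in H3; [|intros; reflexivity].
    replace (ln x ^ S i / x ^ 2) with (plus (-( INR (S i) * ln x ^ i / x / x - ln x ^ S i / x^2))
       (INR (S i) * (ln x ^ i / x ^ 2))); auto.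
    unfold plus; simpl. field. lra.
Qed.

Lemma J_nonpos i x : 1 <= x -> J i x <= 0.
Proof.
  intros Hx. induction i.
  - simpl. assert (0 < / x) by (apply Rinv_0_lt_compat; lra). lra.
  - change (J (S i) x) with (- (ln x ^ S i / x) + INR (S i) * J i x). assert (0 <= ln x) by (rewrite <- ln_1; apply ln_le; lra).
    assert (0 <= ln x ^ S i / x). { apply Rdiv_le_0_compat. apply pow_le; auto. lra. }
    pose proof (pos_INR (S i)). nra.
Qed.

Lemma h_cont i x : 0 < x -> continuous (h i) x.
Proof. intros. apply (@ex_derive_continuous R_AbsRing R_NormedModule). unfold h. auto_derive. repeat split; auto; try lra. apply Rmult_integral_contrapositive_currified; [lra|]. apply Rmult_integral_contrapositive_currified; lra. Qed.

Lemma h_nonneg i x : 1 <= x -> 0 <= h i x.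
Proof.
  intros Hx. unfold h. assert (0 <= ln x) by (rewrite <- ln_1; apply ln_le; lra).
  apply Rdiv_le_0_compat. apply pow_le; auto. nra.
Qed.

Lemma g_ex i b : 1 <= b -> ex_RInt (g i) 1 b.
Proof. apply (exRInt_frac (h i)). intros; apply h_cont; lra. Qed.

Lemma h_RInt i b : 1 <= b -> RInt (h i) 1 b = J i b - J i 1.
Proof.
  intros Hb. apply is_RInt_unique.
  apply (is_RInt_derive (J i) (h i)).
  - intros x Hx. rewrite Rmin_left in Hx by lra. apply J_deriv. lra.
  - intros x Hx. rewrite Rmin_left in Hx by lra. apply h_cont. lra.
Qed.

Lemma g_lim i : { L | limI (g i) L }.
Proof.
  apply (limI_mono (g i) (- J i 1)).
  - apply g_ex.
  - intros x Hx. unfold g. pose proof (frac_bnd x). pose proof (h_nonneg i x Hx). nra.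
  - intros b Hb. apply Rle_trans with (RInt (h i) 1 b).
    + apply RInt_le; auto. apply g_ex; auto.
      apply (@ex_RInt_continuous R_CompleteNormedModule). intros z Hz. rewrite Rmin_left in Hz by lra.
      apply h_cont; lra.
      intros x Hx. unfold g. pose proof (frac_bnd x). pose proof (h_nonneg i x ltac:(lra)). nra.
    + rewrite h_RInt by auto. pose proof (J_nonpos i b Hb). lra.
Qed.

Definition Lg (i : nat) : R := proj1_sig (g_lim i).
Lemma Lg_spec i : limI (g i) (Lg i).
Proof. exact (proj2_sig (g_lim i)). Qed.

Definition fj (j : nat) (x : R) : R := g j x - INR j * g (pred j) x.

Definition Fk (j : nat) (k : R) (y : R) : R :=
  ln y ^ (j+1) / INR (j+1) - ln y ^ j + k * (ln y ^ j / y).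

Lemma fj_piece j (k : nat) : (1 <= k)%nat ->
  is_RInt (fj j) (INR k) (INR k + 1) (Fk j (INR k) (INR k + 1) - Fk j (INR k) (INR k)).
Proof.
  intros Hk. apply le_INR in Hk. simpl in Hk.
  set (d := fun y => (y - INR k) * (ln y ^ j / y ^ 2 - INR j * (ln y ^ pred j / y ^ 2))).
  apply is_RInt_ext with d.
  { intros x Hx. rewrite Rmin_left in Hx by lra. rewrite Rmax_right in Hx by lra.
    unfold d, fj, g, h. rewrite (frac_int k x) by lra. match goal with |- ?a = ?b => change (@eq R a b) end; ring. }
  apply (is_RInt_derive (Fk j (INR k)) d).
  - intros x Hx. rewrite Rmin_left in Hx by lra. rewrite Rmax_right in Hx by lra.
    unfold Fk, d. auto_derive. repeat split; lra.
    replace (Init.Nat.pred (j+1)) with j by lia.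
    assert (INR (j+1) <> 0) by (rewrite plus_INR; simpl; pose proof (pos_INR j); lra).
    field. split; lra.
  - intros x Hx. rewrite Rmin_left in Hx by lra. rewrite Rmax_right in Hx by lra.
    apply (@ex_derive_continuous R_AbsRing R_NormedModule). unfold d. auto_derive.
    repeat split; auto; try lra; apply Rmult_integral_contrapositive_currified; try lra;
    apply Rmult_integral_contrapositive_currified; lra.
Qed.

Lemma is_RInt_eq (f : R -> R) a b l l' : is_RInt f a b l -> l = l' -> is_RInt f a b l'.
Proof. intros H ->; exact H. Qed.

Lemma fj_N j N : (1 <= N)%nat -> is_RInt (fj j) 1 (INR N) (0 ^ j - stieltjes_seq j N).
Proof.
  intros HN. destruct N as [|M]; [lia|]. clear HN.
  induction M.
  - replace (0 ^ j - stieltjes_seq j 1) with 0. apply (is_RInt_point (fj j) 1).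
    unfold stieltjes_seq. simpl. rewrite ln_1. rewrite (pow_i (j+1)) by lia. field. rewrite plus_INR; simpl; pose proof (pos_INR j); lra.
  - assert (Hk := fj_piece j (S M) ltac:(lia)).
    rewrite (S_INR (S M)).
    apply is_RInt_eq with (plus (0 ^ j - stieltjes_seq j (S M))
        (Fk j (INR (S M)) (INR (S M) + 1) - Fk j (INR (S M)) (INR (S M)))).
    apply (is_RInt_Chasles (fj j) 1 (INR (S M))); auto.
    change (plus ?a ?b) with (Rplus a b). unfold stieltjes_seq, Fk.
    replace (S (S M) - 1)%nat with (S M) by lia. replace (S M - 1)%nat with M by lia.
    change (sum_f_R0 (fun j0 : nat => ln (INR (j0 + 1)) ^ j / INR (j0 + 1)) (S M)) with
      (sum_f_R0 (fun j0 : nat => ln (INR (j0 + 1)) ^ j / INR (j0 + 1)) M + ln (INR (S M + 1)) ^ j / INR (S M + 1)).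
    replace (S M + 1)%nat with (S (S M)) by lia. rewrite (S_INR (S M)).
    assert (0 < INR (S M)) by (apply lt_0_INR; lia).
    assert (INR (j+1) <> 0) by (rewrite plus_INR; simpl; pose proof (pos_INR j); lra).
    match goal with |- ?a = ?b => change (@eq R a b) end. field. lra.
Qed.

Lemma fj_lim j : limI (fj j) (Lg j + (- INR j) * Lg (pred j)).
Proof.
  apply limI_ext with (fun x => g j x + (- INR j) * g (pred j) x).
  intros; unfold fj; ring.
  apply (limI_plus (g j) (fun x => - INR j * g (pred j) x)). apply Lg_spec.
  apply (limI_scal (- INR j) (g (pred j))). apply Lg_spec.
Qed.

Lemma stieltjes_eq j : stieltjes j = 0 ^ j - (Lg j - INR j * Lg (pred j)).
Proof.
  unfold stieltjes.
  replace (0 ^ j - (Lg j - INR j * Lg (pred j))) with (0 ^ j - (Lg j + (- INR j) * Lg (pred j))) by ring.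
  apply (lim_real _ (fj j)). apply fj_lim.
  intros N HN. rewrite (is_RInt_unique _ _ _ _ (fj_N j N HN)). ring.
Qed.

Lemma sign_sub j m : (j <= m)%nat -> (-1) ^ (m - j) = (-1) ^ m * (-1) ^ j.
Proof.
  intros H. replace m with ((m - j) + j)%nat at 2 by lia. rewrite pow_add.
  rewrite Rmult_assoc, <- pow_add. replace (j + j)%nat with (2 * j)%nat by lia.
  rewrite pow_mult. replace ((-1) ^ 2) with 1 by ring. rewrite pow1. ring.
Qed.

Lemma parts (x y L : nat -> R) m :
  sum_f_R0 (fun j => x j * L j - y j * L (S j)) m =
  sum_f_R0 (fun k => (x k - match k with O => 0 | S k' => y k' end) * L k) m - y m * L (S m).
Proof.
  induction m.
  - simpl. ring.
  - simpl sum_f_R0. rewrite IHm. ring.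
Qed.

Lemma sq_sign m : (-1) ^ m * (-1) ^ m = 1.
Proof. rewrite <- sign_sub by lia. rewrite Nat.sub_diag. reflexivity. Qed.

Theorem theorem2p1 (n : nat) :
  exists I : R,
    is_RInt_gen (fun x : R => frac x / x ^ 2 * laguerre n (ln x))
      (at_point 1) (Rbar_locally p_infty) I
    /\ ell n = powerRZ (-1) (Z.of_nat n - 1)%Z * I.
Proof.
  set (a := fun k => Binomial.C n k * (-1) ^ k / INR (Factorial.fact k)).
  exists (sum_f_R0 (fun k => a k * Lg k) n). split.
  - apply limI_gen. apply limI_ext with (fun x => sum_f_R0 (fun k => a k * g k x) n).
    + intros x Hx. unfold laguerre. rewrite scal_sum. apply sum_eq. intros i _. unfold a, g, h.
      unfold Rdiv; ring.
    + apply (limI_sum (fun k x => a k * g k x) (fun k => a k * Lg k)). intros k _.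
      apply (limI_scal (a k) (g k)). apply Lg_spec.
  - destruct n as [|m].
    + simpl ell. rewrite stieltjes_eq. unfold a. simpl. rewrite C_n_0. field.
    + set (y := fun j => Binomial.C m j * (-1) ^ (m - j) / INR (Factorial.fact (S j))).
      set (x := fun j => y j * INR (S j)).
      change (ell (S m)) with (sum_f_R0 (fun j => Binomial.C m j * (-1) ^ (S m - (j + 1))
                               / INR (Factorial.fact (j + 1)) * stieltjes (j + 1)) m).
      rewrite (sum_eq _ (fun j => x j * Lg j - y j * Lg (S j))).
      2:{ intros j Hj. rewrite stieltjes_eq. replace (S m - (j+1))%nat with (m - j)%nat by lia.
          replace (j+1)%nat with (S j) by lia. simpl pred. unfold x, y. simpl (0 ^ S j). ring. }
      rewrite parts.
      replace (powerRZ (-1) (Z.of_nat (S m) - 1)) with ((-1) ^ m)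
        by (rewrite pow_powerRZ; f_equal; lia).
      rewrite tech5, Rmult_plus_distr_l, scal_sum.
      assert (E1 : sum_f_R0 (fun k => (x k - match k with O => 0 | S k' => y k' end) * Lg k) m =
                   sum_f_R0 (fun k => a k * Lg k * (-1) ^ m) m).
      { apply sum_eq. intros k Hk. unfold x, y, a. destruct k as [|k'].
        - rewrite !C_n_0, Nat.sub_0_r. simpl. field.
        - rewrite !sign_sub by lia. rewrite <- pascal by lia.
          change (Factorial.fact (S (S k'))) with (S (S k') * Factorial.fact (S k'))%nat. rewrite mult_INR.
          change ((-1) ^ (S k')) with (-1 * (-1) ^ k').
          pose proof (INR_fact_neq_0 (S k')). pose proof (pos_INR (S k')).
          field. rewrite S_INR; lra. }
      assert (E2 : - (y m * Lg (S m)) = (-1) ^ m * (a (S m) * Lg (S m))).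
      { unfold y, a. rewrite C_n_n, C_n_n, Nat.sub_diag.
        change ((-1) ^ (S m)) with (-1 * (-1) ^ m).
        pose proof (sq_sign m). pose proof (INR_fact_neq_0 (S m)).
        simpl pow at 1. transitivity (- ((-1)^m * (-1)^m) / INR (Factorial.fact (S m)) * Lg (S m)). rewrite H; field; auto. field; auto. }
      rewrite E1. lra.
Qed.
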